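(* In the setting described in the context, let $\delta\in(0,\tfrac{\sqrt2}{2})$ with $\lambda_Ka_K-\lambda_1a_1\delta>0$, let $\bar\eta>0$ satisfy $g(\mathbf Q)-g(\mathbf X)\ge\bar\eta\,d_F^2(\mathbf X,\mathbf Q)$ for all $\mathbf X\in\mathrm{St}(d,K)$, set $\delta_1=\delta^2\bar\eta$, and let $\beta_3>0$ satisfy $g(\mathbf Q)-g(\mathbf X)\le\beta_3 d_F^2(\mathbf X,\mathbf Q)$ for all $\mathbf X\in\mathrm{St}(d,K)$. Let $\mathbf X^0=[\mathbf x_1^0,\dots,\mathbf x_K^0]$, where $\mathbf x_j^0$ is a unit eigenvector of $\mathbf C$ associated with its $j$-th largest eigenvalue, $j\in[K]$ (the $K$ principal eigenvectors of $\mathbf C$). If $$\|\mathbf C-\mathbb E[\mathbf C]\|^2\le\frac{\delta_1}{8\beta_3\sum_{j=1}^K 1/\min^2\{\lambda_{j-1}-\lambda_j,\lambda_j-\lambda_{j+1}\}},$$ with the conventions $\lambda_0=+\infty$ and $\lambda_{K+1}=0$, then $g(\mathbf Q)-g(\mathbf X^0)\le\delta_1$.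
   Context: $d>K\ge1$, $\mathrm{St}(d,K)=\{\mathbf X\in\mathbb R^{d\times K}:\mathbf X^\top\mathbf X=\mathbf I_K\}$, $\mathbf Q\in\mathrm{St}(d,K)$, $\lambda_1>\dots>\lambda_K>0$, $\boldsymbol\Theta=\mathrm{diag}(\sqrt{\lambda_1},\dots,\sqrt{\lambda_K})$. Integers $L\ge1$, $n_1,\dots,n_L\ge1$, $n=\sum_ln_l$; $v_1>\dots>v_L>0$; data $\mathbf y_{l,i}=\mathbf Q\boldsymbol\Theta\mathbf z_{l,i}+\boldsymbol\eta_{l,i}\in\mathbb R^d$ ($l\in[L],i\in[n_l]$) with $\mathbf z_{l,i}$ i.i.d. $\mathcal N(\mathbf0,\mathbf I_K)$ independent of $\boldsymbol\eta_{l,i}$ i.i.d. $\mathcal N(\mathbf0,v_l\mathbf I_d)$. Sample covariance $\mathbf C=\frac1n\sum_{l=1}^L\sum_{i=1}^{n_l}\mathbf y_{l,i}\mathbf y_{l,i}^\top$, with $\mathbb E[\mathbf C]=\mathbf Q\boldsymbol\Theta^2\mathbf Q^\top+\sum_{l=1}^L\frac{n_l}{n}v_l\mathbf I_d$; $\|\cdot\|$ is the operator norm. $w_{l,k}=\lambda_k/(\lambda_k+v_l)$, $a_k=\sum_lw_{l,k}\frac{n_l}{n}\frac1{v_l}$, $g(\mathbf X)=\mathrm{tr}(\mathbf X^\top\mathbf Q\boldsymbol\Theta^2\mathbf Q^\top\mathbf X\,\mathrm{diag}(a_1,\dots,a_K))$, $d_F(\mathbf X,\mathbf Q)=\min_{\mathbf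 q\in\{\pm1\}^K}\|\mathbf X-\mathbf Q\,\mathrm{diag}(\mathbf q)\|_F$. *)

(* Defs.v *)
From HB Require Import structures.
From mathcomp Require Import all_boot all_order all_algebra.
From mathcomp Require Import classical_sets reals.
Set Implicit Arguments. Unset Strict Implicit. Unset Printing Implicit Defensive.
Import Order.TTheory GRing.Theory Num.Theory.
Local Open Scope ring_scope.
Local Open Scope classical_set_scope.

Section Defs.
Variable R : realType.

Definition vnorm (p : nat) (x : 'cV[R]_p) : R :=
  Num.sqrt (\sum_(i < p) (x i 0) ^+ 2).

Definition frob (p q : nat) (A : 'M[R]_(p, q)) : R :=
  Num.sqrt (\sum_(i < p) \sum_(j < q) (A i j) ^+ 2).

Definition opnorm (p q : nat) (A : 'M[R]_(p, q)) : R :=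
  sup [set vnorm (A *m x) | x in [set x : 'cV[R]_q | vnorm x = 1]].

Definition stiefel (d K : nat) (X : 'M[R]_(d, K)) : Prop := X^T *m X = 1%:M.

Definition signmx (K : nat) (s : {ffun 'I_K -> bool}) : 'M[R]_K :=
  diag_mx (\row_k (if s k then -1 else 1)).

(* d_F(X,Q) = min_{q in {+-1}^K} ||X - Q diag(q)||_F
   (the seed value frob (X - Q) is itself the term for q = (1,...,1)) *)
Definition dF (d K : nat) (X Q : 'M[R]_(d, K)) : R :=
  \big[Num.min/frob (X - Q)]_(s : {ffun 'I_K -> bool}) frob (X - Q *m signmx s).

(* Theta = diag(sqrt lam_1, ..., sqrt lam_K); lam is 1-indexed *)
Definition Theta (K : nat) (lam : nat -> R) : 'M[R]_K :=
  diag_mx (\row_(k < K) Num.sqrt (lam k.+1)).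

Definition ntot (L : nat) (nl : nat -> nat) : nat := (\sum_(1 <= l < L.+1) nl l)%N.

Definition wlk (lam v : nat -> R) (l k : nat) : R := lam k / (lam k + v l).

Definition ak (L : nat) (nl : nat -> nat) (lam v : nat -> R) (k : nat) : R :=
  \sum_(1 <= l < L.+1) wlk lam v l k * ((nl l)%:R / (ntot L nl)%:R) * (v l)^-1.

Definition gfun (d K L : nat) (nl : nat -> nat) (lam v : nat -> R)
    (Q X : 'M[R]_(d, K)) : R :=
  \tr (X^T *m Q *m (Theta K lam *m Theta K lam) *m Q^T *m X
        *m diag_mx (\row_(k < K) ak L nl lam v k.+1)).

Definition ydat (d K : nat) (Q : 'M[R]_(d, K)) (lam : nat -> R)
    (z : nat -> nat -> 'cV[R]_K) (eta : nat -> nat -> 'cV[R]_d) (l i : nat)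
    : 'cV[R]_d :=
  Q *m Theta K lam *m z l i + eta l i.

(* sample covariance C = (1/n) sum_l sum_{i<n_l} y y^T  (i = 1..n_l shifted to 0..n_l-1) *)
Definition Csample (d K L : nat) (nl : nat -> nat) (Q : 'M[R]_(d, K))
    (lam : nat -> R) (z : nat -> nat -> 'cV[R]_K) (eta : nat -> nat -> 'cV[R]_d)
    : 'M[R]_d :=
  ((ntot L nl)%:R)^-1 *:
    \sum_(1 <= l < L.+1) \sum_(i < nl l)
       (ydat Q lam z eta l i *m (ydat Q lam z eta l i)^T).

Definition ECov (d K L : nat) (nl : nat -> nat) (Q : 'M[R]_(d, K))
    (lam v : nat -> R) : 'M[R]_d :=
  Q *m (Theta K lam *m Theta K lam) *m Q^T
  + (\sum_(1 <= l < L.+1) ((nl l)%:R / (ntot L nl)%:R) * v l)%:M.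

(* min{lam_{j-1}-lam_j, lam_j-lam_{j+1}} with lam_0 = +oo, lam_{K+1} = 0, j = 1..K *)
Definition gapmin (K : nat) (lam : nat -> R) (j : nat) : R :=
  let right := lam j - (if j == K then 0 else lam j.+1) in
  if j == 1%N then right else Num.min (lam j.-1 - lam j) right.

(* X^0 consists of the K principal eigenvectors of the symmetric matrix C:
   there is an orthonormal eigenbasis V of C with eigenvalues mu sorted in
   nonincreasing order (C = V diag(mu) V^T), and the j-th column of X0 is the
   j-th column of V (a unit eigenvector for the j-th largest eigenvalue). *)
Definition principal_eigvecs (d K : nat) (hKd : (K <= d)%N)
    (C : 'M[R]_d) (X0 : 'M[R]_(d, K)) : Prop :=
  exists (V : 'M[R]_d) (mu : 'I_d -> R),
    [/\ V^T *m V = 1%:M,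
        C = V *m diag_mx (\row_i mu i) *m V^T,
        (forall i j : 'I_d, (i <= j)%N -> mu j <= mu i) &
        (forall (i : 'I_d) (j : 'I_K), X0 i j = V i (widen_ord hKd j))].

End Defs.

(* Main.v *)
Require Import Defs.
From HB Require Import structures.
From mathcomp Require Import all_boot all_order all_algebra.
From mathcomp Require Import classical_sets reals.
From mathcomp Require Import ring lra zify.
Import Order.TTheory GRing.Theory Num.Theory.
Local Open Scope ring_scope.

Set Implicit Arguments. Unset Strict Implicit. Unset Printing Implicit Defensive.


Section Aux.
Variable R : realType.

Definition dot n (u w : 'cV[R]_n) : R := (u^T *m w) 0 0.

Lemma dotE n (u w : 'cV[R]_n) : dot u w = \sum_i u i 0 * w i 0.
Proof. by rewrite /dot mxE; apply: eq_bigr => i _; rewrite mxE. Qed.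

Lemma dotC n (u w : 'cV[R]_n) : dot u w = dot w u.
Proof. by rewrite !dotE; apply: eq_bigr => i _; rewrite mulrC. Qed.

Lemma dotDl n (u v w : 'cV[R]_n) : dot (u + v) w = dot u w + dot v w.
Proof. by rewrite /dot linearD /= mulmxDl mxE. Qed.

Lemma dotZl n a (u w : 'cV[R]_n) : dot (a *: u) w = a * dot u w.
Proof. by rewrite /dot linearZ /= -scalemxAl mxE. Qed.

Lemma dotNl n (u w : 'cV[R]_n) : dot (- u) w = - dot u w.
Proof. by rewrite -scaleN1r dotZl mulN1r. Qed.

Lemma dotBl n (u v w : 'cV[R]_n) : dot (u - v) w = dot u w - dot v w.
Proof. by rewrite dotDl dotNl. Qed.

Lemma dotDr n (u v w : 'cV[R]_n) : dot w (u + v) = dot w u + dot w v.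
Proof. by rewrite dotC dotDl !(dotC w). Qed.

Lemma dotZr n a (u w : 'cV[R]_n) : dot w (a *: u) = a * dot w u.
Proof. by rewrite dotC dotZl dotC. Qed.

Lemma dotBr n (u v w : 'cV[R]_n) : dot w (u - v) = dot w u - dot w v.
Proof. by rewrite dotC dotBl !(dotC w). Qed.

Lemma dot_mulmx m n (A : 'M[R]_(m, n)) u w : dot u (A *m w) = dot (A^T *m u) w.
Proof. by rewrite /dot trmx_mul trmxK mulmxA. Qed.

Lemma dot0r n (u : 'cV[R]_n) : dot u 0 = 0.
Proof. by rewrite /dot mulmx0 mxE. Qed.

Lemma dot_ge0 n (x : 'cV[R]_n) : 0 <= dot x x.
Proof. by rewrite dotE; apply: sumr_ge0 => i _; rewrite -expr2 sqr_ge0. Qed.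

Lemma dot_eq0 n (x : 'cV[R]_n) : dot x x = 0 -> x = 0.
Proof.
rewrite dotE => h.
have h' : \sum_i x i 0 ^+ 2 = 0 := etrans (eq_bigr _ (fun i _ => expr2 (x i 0))) h.
apply/matrixP => i j; rewrite (ord1 j) mxE.
have := psumr_eq0P (fun i _ => sqr_ge0 (x i 0)) h' (i:=i) erefl.
by move/eqP; rewrite sqrf_eq0 => /eqP.
Qed.

Lemma vnorm_sq n (x : 'cV[R]_n) : vnorm x ^+ 2 = dot x x.
Proof.
rewrite /vnorm sqr_sqrtr; last by apply: sumr_ge0 => i _; apply: sqr_ge0.
by rewrite dotE; apply: eq_bigr => i _; rewrite expr2.
Qed.

Lemma vnorm_ge0 n (x : 'cV[R]_n) : 0 <= vnorm x.
Proof. exact: sqrtr_ge0. Qed.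

Lemma vnormZ n a (x : 'cV[R]_n) : vnorm (a *: x) = `|a| * vnorm x.
Proof.
rewrite /vnorm (eq_bigr (fun i => a ^+ 2 * x i 0 ^+ 2)); last first.
  by move=> i _; rewrite mxE exprMn.
by rewrite -mulr_sumr sqrtrM ?sqr_ge0 // sqrtr_sqr.
Qed.

Lemma CS n (u w : 'cV[R]_n) : dot u w ^+ 2 <= dot u u * dot w w.
Proof.
set a := dot u u; set b := dot u w; set c := dot w w.
have := dot_ge0 (b *: u - a *: w).
rewrite !(dotBl, dotBr, dotZl, dotZr) -/a -/b -/c (dotC w u) -/b => h.
have ha : 0 <= a by apply: dot_ge0.
have [a0|apos] := eqVneq a 0.
  have -> : b = 0 by rewrite /b (dot_eq0 a0) dotC dot0r.
  by rewrite a0 expr0n /= mul0r.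
have apos' : 0 < a by rewrite lt_def apos ha.
nra.
Qed.


Lemma vnorm0 n : vnorm (0 : 'cV[R]_n) = 0.
Proof. by rewrite -(scale0r (0 : 'cV[R]_n)) vnormZ normr0 mul0r. Qed.

Lemma vnorm_mul_le_frob p q (A : 'M[R]_(p,q)) x :
  dot x x = 1 -> vnorm (A *m x) <= frob A.
Proof.
move=> hx; rewrite /vnorm /frob ler_sqrt; last first.
  by apply: sumr_ge0 => i _; apply: sumr_ge0 => j _; apply: sqr_ge0.
apply: ler_sum => i _.
have := CS (row i A)^T x; rewrite hx mulr1.
have -> : dot (row i A)^T x = (A *m x) i 0.
  by rewrite dotE mxE; apply: eq_bigr => k _; rewrite !mxE.
have -> : dot (row i A)^T (row i A)^T = \sum_j A i j ^+ 2.
  by rewrite dotE; apply: eq_bigr => k _; rewrite !mxE expr2.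
by [].
Qed.

Lemma opnorm_ub p q (A : 'M[R]_(p,q)) x : vnorm (A *m x) <= opnorm A * vnorm x.
Proof.
have hub : has_ubound [set vnorm (A *m x) | x in [set x | vnorm x = 1]]%classic.
  exists (frob A) => _ [y hy <-]; apply: vnorm_mul_le_frob.
  by rewrite -vnorm_sq hy expr1n.
have [x0|xn0] := eqVneq (dot x x) 0.
  by rewrite (dot_eq0 x0) mulmx0 (vnorm0 p) (vnorm0 q) mulr0.
set t := vnorm x.
have tpos : 0 < t.
  rewrite lt_def vnorm_ge0 andbT; apply/eqP => t0; move: xn0.
  by rewrite -vnorm_sq -/t t0 expr0n eqxx.
have hu : vnorm (t^-1 *: x) = 1.
  by rewrite vnormZ ger0_norm ?invr_ge0 ?(ltW tpos) // mulVf // gt_eqF.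
have := ub_le_sup hub (ex_intro2 _ _ _ hu erefl).
rewrite -scalemxAr vnormZ ger0_norm ?invr_ge0 ?(ltW tpos) //.
by move=> h; rewrite -ler_pdivrMr // mulrC.
Qed.

Lemma dot_delta n (i : 'I_n) : dot (delta_mx i 0) (delta_mx i 0) = 1 :> R.
Proof. by rewrite /dot trmx_delta mul_delta_mx mxE !eqxx. Qed.

Lemma opnorm_ge0 p q (A : 'M[R]_(p,q)) (i : 'I_q) : 0 <= opnorm A.
Proof.
have := opnorm_ub A (delta_mx i 0).
have -> : vnorm (delta_mx i 0 : 'cV[R]_q) = 1.
  by rewrite -[LHS]ger0_norm ?vnorm_ge0 // -sqrtr_sqr vnorm_sq dot_delta sqrtr1.
by rewrite mulr1; apply: le_trans; apply: vnorm_ge0.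
Qed.

Lemma opnorm_sq n (A : 'M[R]_n) x : dot (A *m x) (A *m x) <= opnorm A ^+ 2 * dot x x.
Proof.
have h1 := opnorm_ub A x; have h2 := vnorm_ge0 (A *m x); have h3 := vnorm_ge0 x.
rewrite -!vnorm_sq; nra.
Qed.

Lemma opnorm_quad n (A : 'M[R]_n) y : 0 <= opnorm A ->
  `|dot y (A *m y)| <= opnorm A * dot y y.
Proof.
move=> e0; have h1 := CS y (A *m y); have h2 := opnorm_sq A y.
have h3 := dot_ge0 y; have h4 := dot_ge0 (A *m y).
set b := dot y (A *m y) in h1 *; set a := dot y y in h1 h2 h3 *.
set c := dot (A *m y) (A *m y) in h1 h2 h4 *; set e := opnorm A in h2 e0 *.
have h5 : b ^+ 2 <= (e * a) ^+ 2 by nra.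
have h6 : 0 <= e * a by nra.
rewrite ler_norml; apply/andP; split; nra.
Qed.

End Aux.


Section Spec.
Variable R : realType.

Lemma dot_sq n (u : 'cV[R]_n) : dot u u = \sum_i u i 0 ^+ 2.
Proof. by rewrite dotE; apply: eq_bigr => i _; rewrite expr2. Qed.

Lemma dot_diag n (r : 'rV[R]_n) u : dot u (diag_mx r *m u) = \sum_i r 0 i * u i 0 ^+ 2.
Proof. by rewrite dotE; apply: eq_bigr => i _; rewrite mul_diag_mx mxE mulrCA expr2. Qed.

Variables (d K : nat) (hKd : (K <= d)%N).
Variables (Q : 'M[R]_(d,K)) (V : 'M[R]_d) (mu : 'I_d -> R) (lr : 'rV[R]_K) (s e : R) (C : 'M[R]_d).
Hypothesis hQ : Q^T *m Q = 1%:M.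
Hypothesis hV : V^T *m V = 1%:M.
Hypothesis hC : C = V *m diag_mx (\row_i mu i) *m V^T.
Hypothesis hmu : forall i j : 'I_d, (i <= j)%N -> mu j <= mu i.
Hypothesis hlr : forall i j : 'I_K, (i <= j)%N -> lr 0 j <= lr 0 i.
Hypothesis hlr0 : forall i, 0 < lr 0 i.
Hypothesis he1 : forall y, `|dot y ((C - (Q *m diag_mx lr *m Q^T + s%:M)) *m y)| <= e * dot y y.
Hypothesis he2 : forall x, dot ((C - (Q *m diag_mx lr *m Q^T + s%:M)) *m x)
   ((C - (Q *m diag_mx lr *m Q^T + s%:M)) *m x) <= e ^+ 2 * dot x x.

Notation Sig := (Q *m diag_mx lr *m Q^T + s%:M).

Lemma VVt : V *m V^T = 1%:M. Proof. exact: mulmx1C. Qed.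

Lemma quad_C y : dot y (C *m y) = \sum_p mu p * (V^T *m y) p 0 ^+ 2.
Proof.
rewrite hC -!mulmxA dot_mulmx dot_diag; apply: eq_bigr => p _; rewrite mxE.
by [].
Qed.

Lemma quad_Sig y : dot y (Sig *m y) = \sum_l lr 0 l * (Q^T *m y) l 0 ^+ 2 + s * dot y y.
Proof.
by rewrite mulmxDl dotDr mul_scalar_mx dotZr -!mulmxA dot_mulmx dot_diag.
Qed.

Lemma quad_split y : dot y (C *m y) = dot y (Sig *m y) + dot y ((C - Sig) *m y).
Proof. by rewrite mulmxBl dotBr addrC subrK. Qed.

Lemma dotVt y : dot (V^T *m y) (V^T *m y) = dot y y.
Proof. by rewrite dot_mulmx trmxK mulmxA VVt mul1mx. Qed.

Lemma dotVc c : dot (V *m c) (V *m c) = dot c c.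
Proof. by rewrite dot_mulmx mulmxA hV mul1mx. Qed.

Lemma dotQc c : dot (Q *m c) (Q *m c) = dot c c.
Proof. by rewrite dot_mulmx mulmxA hQ mul1mx. Qed.

Lemma bessel y : dot (Q^T *m y) (Q^T *m y) <= dot y y.
Proof.
set z := Q^T *m y.
have := dot_ge0 (y - Q *m z).
have h1 : dot y (Q *m z) = dot z z by rewrite dot_mulmx.
rewrite dotBl !dotBr dotQc h1 (dotC (Q *m z) y) h1; lra.
Qed.

Lemma dot_pos n (c : 'cV[R]_n) : c != 0 -> 0 < dot c c.
Proof.
move=> cn0; rewrite lt_def dot_ge0 andbT; apply/eqP => h; move: cn0.
by rewrite (dot_eq0 h) eqxx.
Qed.

Lemma weyl_lower (k : 'I_K) : lr 0 k + s - e <= mu (widen_ord hKd k).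
Proof.
pose M : 'M[R]_K := \matrix_(i, l) (if (i < k)%N then (V^T *m Q) (widen_ord hKd i) l
   else if i == k then 0 else (i == l)%:R).
have detM : \det M = 0.
  by rewrite (expand_det_row M k) big1 // => l _; rewrite mxE ltnn eqxx mul0r.
have [v vn0 hv] : exists2 v : 'rV_K, v != 0 & v *m M^T = 0.
  by apply/det0P; rewrite det_tr detM.
set c := v^T.
have hMc : M *m c = 0 by have := congr1 trmx hv; rewrite trmx_mul trmxK trmx0.
have cn0 : c != 0 by rewrite /c trmx_eq0.
have hc1 : forall l : 'I_K, (k < l)%N -> c l 0 = 0.
  move=> l hl; have := congr1 (fun A : 'M[R]_(_,1) => A l 0) hMc.
  rewrite [in RHS]mxE mxE => <-.
  have lk : (l == k) = false by apply/eqP => el; move: hl; rewrite el ltnn.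
  rewrite (bigD1 l) //= big1 => [|j hj]; rewrite /M !mxE ltnNge (ltnW hl) /= lk.
    by rewrite eqxx mul1r addr0.
  by rewrite eq_sym (negbTE hj) mul0r.
have hc2 : forall i : 'I_K, (i < k)%N -> (V^T *m (Q *m c)) (widen_ord hKd i) 0 = 0.
  move=> i hi; have := congr1 (fun A : 'M[R]_(_,1) => A i 0) hMc.
  rewrite [in RHS]mxE mxE => h; rewrite mulmxA mxE -[RHS]h.
  by apply: eq_bigr => l _; rewrite /M !mxE hi.
set y := Q *m c.
have hyy : dot y y = dot c c by rewrite dotQc.
have apos : 0 < dot c c by apply: dot_pos.
have hCy : dot y (C *m y) <= mu (widen_ord hKd k) * dot y y.
  rewrite quad_C -dotVt dot_sq mulr_sumr; apply: ler_sum => p _.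
  have [pk|kp] := ltnP p k.
    have pK : (p < K)%N by apply: ltn_trans pk _.
    have -> : p = widen_ord hKd (Ordinal pK) by apply: val_inj.
    by rewrite hc2 // expr0n /= !mulr0.
  by apply: ler_wpM2r; [apply: sqr_ge0 | apply: hmu].
have hSy : (lr 0 k + s) * dot y y <= dot y (Sig *m y).
  rewrite quad_Sig /y mulmxA hQ mul1mx -/y hyy mulrDl lerD2r dot_sq mulr_sumr.
  apply: ler_sum => l _.
  have [kl|lk] := ltnP k l; first by rewrite hc1 // expr0n /= !mulr0.
  by apply: ler_wpM2r; [apply: sqr_ge0 | apply: hlr].
have hEy := he1 y.
move: hEy; rewrite ler_norml => /andP [hE1 _].
have := quad_split y; rewrite hyy in hCy hSy hE1 * => hq.
nra.
Qed.

Lemma weyl_upper (k : 'I_K) : mu (widen_ord hKd k) <= lr 0 k + s + e.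
Proof.
pose M : 'M[R]_d := \matrix_(i, l) (if (i < k)%N then (Q^T *m V) (insubd k i) l
   else if i == widen_ord hKd k then 0 else (i == l)%:R).
have detM : \det M = 0.
  rewrite (expand_det_row M (widen_ord hKd k)) big1 // => l _.
  by rewrite mxE ltnn eqxx mul0r.
have [v vn0 hv] : exists2 v : 'rV_d, v != 0 & v *m M^T = 0.
  by apply/det0P; rewrite det_tr detM.
set c := v^T.
have hMc : M *m c = 0 by have := congr1 trmx hv; rewrite trmx_mul trmxK trmx0.
have cn0 : c != 0 by rewrite /c trmx_eq0.
have hc1 : forall l : 'I_d, (k < l)%N -> c l 0 = 0.
  move=> l hl; have := congr1 (fun A : 'M[R]_(_,1) => A l 0) hMc.
  rewrite [in RHS]mxE mxE => <-.
  have lk : (l == widen_ord hKd k) = false.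
    by apply/eqP => el; move: hl; rewrite el ltnn.
  rewrite (bigD1 l) //= big1 => [|j hj]; rewrite /M !mxE ltnNge (ltnW hl) /= lk.
    by rewrite eqxx mul1r addr0.
  by rewrite eq_sym (negbTE hj) mul0r.
have hc2 : forall i : 'I_K, (i < k)%N -> (Q^T *m (V *m c)) i 0 = 0.
  move=> i hi; have := congr1 (fun A : 'M[R]_(_,1) => A (widen_ord hKd i) 0) hMc.
  rewrite [in RHS]mxE mxE => h; rewrite mulmxA mxE -[RHS]h.
  have ei : insubd k (widen_ord hKd i) = i by apply: val_inj; rewrite val_insubd /= ltn_ord.
  by apply: eq_bigr => l _; rewrite /M !mxE /= hi ei.
set y := V *m c.
have hyy : dot y y = dot c c by rewrite dotVc.
have apos : 0 < dot c c by apply: dot_pos.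
have hCy : mu (widen_ord hKd k) * dot y y <= dot y (C *m y).
  rewrite quad_C hyy /y mulmxA hV mul1mx dot_sq mulr_sumr; apply: ler_sum => p _.
  have [kp|pk] := ltnP k p; first by rewrite hc1 // expr0n /= !mulr0.
  by apply: ler_wpM2r; [apply: sqr_ge0 | apply: hmu].
have hSy : dot y (Sig *m y) <= (lr 0 k + s) * dot y y.
  rewrite quad_Sig mulrDl lerD2r.
  apply: (@le_trans _ _ (lr 0 k * dot (Q^T *m y) (Q^T *m y))).
    rewrite dot_sq mulr_sumr; apply: ler_sum => l _.
    have [lk|kl] := ltnP l k; first by rewrite hc2 // expr0n /= !mulr0.
    by apply: ler_wpM2r; [apply: sqr_ge0 | apply: hlr].
  by apply: ler_wpM2l; [apply: ltW | apply: bessel].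
have hEy := he1 y.
move: hEy; rewrite ler_norml => /andP [_ hE2].
have := quad_split y; rewrite hyy in hCy hSy hE2 * => hq.
nra.
Qed.


Lemma eigvec_bound (k : 'I_K) (m : R) :
  (forall l, l != k -> m ^+ 2 <= (lr 0 l + (s - mu (widen_ord hKd k))) ^+ 2) ->
  m ^+ 2 <= (s - mu (widen_ord hKd k)) ^+ 2 ->
  m ^+ 2 * (1 - (Q^T *m (V *m (delta_mx (widen_ord hKd k) 0 : 'cV[R]_d))) k 0 ^+ 2) <= e ^+ 2.
Proof.
move=> hl ha.
set j := widen_ord hKd k; set x := V *m (delta_mx j 0 : 'cV[R]_d); set a := s - mu j.
have hxx : dot x x = 1 by rewrite dotVc dot_delta.
have hD : diag_mx (\row_i mu i) *m (delta_mx j 0 : 'cV[R]_d) = mu j *: (delta_mx j 0 : 'cV[R]_d).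
  rewrite mul_diag_mx; apply/matrixP => p q; rewrite !mxE.
  by case: (eqVneq p j) => [->|_] //=; rewrite !mulr0.
have hCx : C *m x = mu j *: x.
  by rewrite hC /x -!mulmxA (mulmxA V^T) hV mul1mx hD scalemxAr.
have hw : Sig *m x - mu j *: x = - ((C - Sig) *m x) by rewrite mulmxBl hCx opprB.
have hww : dot (Sig *m x - mu j *: x) (Sig *m x - mu j *: x) <= e ^+ 2.
  by rewrite hw dotNl dotC dotNl opprK; have := he2 x; rewrite hxx mulr1.
set cc := Q^T *m x.
have hSx : Sig *m x - mu j *: x = Q *m (diag_mx lr *m cc) + a *: x.
  by rewrite mulmxDl mul_scalar_mx -!mulmxA /a scalerBl addrA.
set u := diag_mx lr *m cc.
have hxQ : dot x (Q *m u) = dot cc u by rewrite dot_mulmx.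
move: hww; rewrite hSx dotDl !dotDr dotQc !dotZl !dotZr hxx (dotC (Q *m u) x) hxQ.
have E1 : dot u u = \sum_l (lr 0 l * cc l 0) ^+ 2.
  by rewrite dot_sq; apply: eq_bigr => l _; rewrite /u mul_diag_mx mxE.
have E2 : dot cc u = \sum_l lr 0 l * cc l 0 ^+ 2 by rewrite dot_diag.
have hS : \sum_l cc l 0 ^+ 2 <= 1 by rewrite -dot_sq -hxx; apply: bessel.
have key : \sum_l (lr 0 l * cc l 0) ^+ 2 + (2 * a) * \sum_l lr 0 l * cc l 0 ^+ 2 =
   \sum_l (lr 0 l + a) ^+ 2 * cc l 0 ^+ 2 - a ^+ 2 * \sum_l cc l 0 ^+ 2.
  rewrite !mulr_sumr -big_split -sumrB; apply: eq_bigr => l _ /=; ring.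
rewrite E1 E2 => hww.
have sF : \sum_l (lr 0 l + a) ^+ 2 * cc l 0 ^+ 2 = (lr 0 k + a) ^+ 2 * cc k 0 ^+ 2 +
   \sum_(l | l != k) (lr 0 l + a) ^+ 2 * cc l 0 ^+ 2 by rewrite (bigD1 k).
have sG : \sum_l cc l 0 ^+ 2 = cc k 0 ^+ 2 + \sum_(l | l != k) cc l 0 ^+ 2 by rewrite (bigD1 k).
have low : m ^+ 2 * \sum_(l | l != k) cc l 0 ^+ 2 <=
           \sum_(l | l != k) (lr 0 l + a) ^+ 2 * cc l 0 ^+ 2.
  rewrite mulr_sumr; apply: ler_sum => l hlk.
  by apply: ler_wpM2r; [apply: sqr_ge0 | apply: hl].
have Fk : 0 <= (lr 0 k + a) ^+ 2 * cc k 0 ^+ 2 by rewrite mulr_ge0 ?sqr_ge0.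
have hm2 : 0 <= m ^+ 2 by apply: sqr_ge0.
move: hww key sF sG hS low Fk hm2 ha.
set F := \sum_l (lr 0 l + a) ^+ 2 * cc l 0 ^+ 2.
set G := \sum_l cc l 0 ^+ 2.
set F1 := \sum_(l | l != k) (lr 0 l + a) ^+ 2 * cc l 0 ^+ 2.
set G1 := \sum_(l | l != k) cc l 0 ^+ 2.
set P := \sum_l (lr 0 l * cc l 0) ^+ 2.
set P2 := \sum_l lr 0 l * cc l 0 ^+ 2.
move=> h1 h2 h3 h4 h5 h6 h7 h8; rewrite -/j -/a => h9.
have h10 : 0 <= (a ^+ 2 - m ^+ 2) * (1 - G) by apply: mulr_ge0; lra.
nra.
Qed.

End Spec.


Section Gap.
Variable R : realType.
Variables (K : nat) (lam : nat -> R).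
Hypothesis hlam : forall k, (1 <= k < K)%N -> lam k.+1 < lam k.
Hypothesis hlamK : 0 < lam K.

Lemma lam_mono i j : (1 <= i)%N -> (i <= j)%N -> (j <= K)%N -> lam j <= lam i.
Proof.
move=> hi; elim: j => [|j IH] hij hj; first by move: (leq_trans hi hij).
have [->|ne] := eqVneq i j.+1; first by [].
have hij' : (i <= j)%N by rewrite -ltnS ltn_neqAle ne hij.
apply: le_trans (IH hij' (ltnW hj)).
by apply: ltW; apply: hlam; rewrite hj andbT; exact: leq_trans hi hij'.
Qed.

Lemma lam_pos i : (1 <= i)%N -> (i <= K)%N -> 0 < lam i.
Proof. by move=> h1 h2; apply: lt_le_trans hlamK (lam_mono h1 h2 _). Qed.

Lemma gap_facts (k : 'I_K) :
  [/\ 0 < gapmin K lam k.+1, gapmin K lam k.+1 <= lam k.+1 &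
      forall l : 'I_K, l != k -> gapmin K lam k.+1 <= `|lam l.+1 - lam k.+1| ].
Proof.
have kK := ltn_ord k.
set g := gapmin K lam k.+1.
set right := lam k.+1 - (if k.+1 == K then 0 else lam k.+2).
have hr : g <= right.
  rewrite /g /gapmin -/right; case: ifP => _ //; by rewrite ge_min lexx orbT.
have hl1 : (1 < k.+1)%N -> g <= lam k - lam k.+1.
  move=> h; rewrite /g /gapmin -/right; case: ifP => [/eqP e|_]; first by move: h; rewrite e.
  by rewrite ge_min lexx.
have hrp : 0 < right /\ right <= lam k.+1.
  rewrite /right; case: ifP => [_|/negbT hn]; first by rewrite subr0 lexx lam_pos.
  have hk2 : (k.+2 <= K)%N by rewrite ltn_neqAle hn kK.
  have := hlam (k := k.+1); rewrite hk2 /= => /(_ isT) h1.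
  have := lam_pos (i := k.+2) isT hk2; lra.
case: hrp => hrp1 hrp2.
have gpos : 0 < g.
  rewrite /g /gapmin -/right; case: ifP => // /negbT h1.
  rewrite lt_min hrp1 andbT subr_gt0; apply: hlam; rewrite kK andbT; lia.
split => //; first by apply: le_trans hr hrp2.
move=> l hlk.
have [lk|kl] := ltnP l k.
  have h1 : lam k <= lam l.+1 by apply: lam_mono; lia.
  have h2 : g <= lam k - lam k.+1 by apply: hl1; lia.
  have h3 : lam k.+1 <= lam k by apply: lam_mono; lia.
  rewrite ger0_norm; lra.
have kl' : (k < l)%N by rewrite ltn_neqAle kl andbT eq_sym; apply: contraNneq hlk => /val_inj ->.
have lK := ltn_ord l.
have hkK : (k.+1 == K) = false by apply/negbTE; lia.
move: hr; rewrite /right hkK => hr.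
have h1 : lam l.+1 <= lam k.+2 by apply: lam_mono; lia.
have h3 : lam l.+1 <= lam k.+1 by apply: lam_mono; lia.
rewrite ler0_norm; lra.
Qed.

End Gap.

Lemma sq_lb (R : realType) (u r g e : R) :
  0 <= g - e -> g <= `|u| -> `|r| <= e -> (g - e) ^+ 2 <= (u + r) ^+ 2.
Proof.
move=> h0 h1 h2; have h3 := lerB_normD u r.
rewrite -[(u + r) ^+ 2]real_normK ?num_real //.
have h4 : 0 <= `|u + r| := normr_ge0 _.
nra.
Qed.

Lemma dot_delta_r (R : realType) n (y : 'cV[R]_n) j : dot y (delta_mx j 0) = y j 0.
Proof. by rewrite /dot -colE !mxE. Qed.

Unset Implicit Arguments. Set Strict Implicit.

Theorem lemma9 (R : realType) (d K L : nat) (nl : nat -> nat)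
    (lam v : nat -> R) (Q : 'M[R]_(d, K))
    (z : nat -> nat -> 'cV[R]_K) (eta : nat -> nat -> 'cV[R]_d)
    (delta etab beta3 : R) (X0 : 'M[R]_(d, K))
    (hK1 : (1 <= K)%N) (hKd : (K < d)%N) (hL : (1 <= L)%N)
    (hnl : forall l, (1 <= l <= L)%N -> (1 <= nl l)%N)
    (hQ : stiefel Q)
    (hlam : forall k, (1 <= k < K)%N -> lam k.+1 < lam k)
    (hlamK : 0 < lam K)
    (hv : forall l, (1 <= l < L)%N -> v l.+1 < v l)
    (hvL : 0 < v L)
    (hdelta : 0 < delta < Num.sqrt 2 / 2)
    (hdelta2 : 0 < lam K * ak L nl lam v K - lam 1 * ak L nl lam v 1 * delta)
    (hetab : 0 < etab)
    (hetab2 : forall X : 'M[R]_(d, K), stiefel X ->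
        etab * (dF X Q) ^+ 2 <= gfun L nl lam v Q Q - gfun L nl lam v Q X)
    (hbeta3 : 0 < beta3)
    (hbeta32 : forall X : 'M[R]_(d, K), stiefel X ->
        gfun L nl lam v Q Q - gfun L nl lam v Q X <= beta3 * (dF X Q) ^+ 2)
    (hX0 : principal_eigvecs (ltnW hKd) (Csample L nl Q lam z eta) X0)
    (hC : (opnorm (Csample L nl Q lam z eta - ECov L nl Q lam v)) ^+ 2
          <= (delta ^+ 2 * etab) /
             (8 * beta3 * \sum_(1 <= j < K.+1) ((gapmin K lam j) ^+ 2)^-1)) :
  gfun L nl lam v Q Q - gfun L nl lam v Q X0 <= delta ^+ 2 * etab.
Proof.
case: hX0 => V [mu [hV hCV hmu hX0c]].
set hKd' := ltnW hKd in hX0c.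
set C := Csample L nl Q lam z eta in hCV hC.
set e := opnorm (C - ECov L nl Q lam v) in hC.
set s := \sum_(1 <= l < L.+1) ((nl l)%:R / (ntot L nl)%:R) * v l.
pose lr : 'rV[R]_K := \row_(k < K) lam k.+1.
have lrE : forall k, lr 0 k = lam k.+1 by move=> k; rewrite /lr mxE.
have hTh : Theta K lam *m Theta K lam = diag_mx lr.
  rewrite /Theta mul_diag_mx; apply/matrixP => i j; rewrite !mxE.
  case: (eqVneq i j) => [->|_] /=; last by rewrite !mulr0n mulr0.
  rewrite !mulr1n -expr2 sqr_sqrtr //; apply: ltW; apply: (lam_pos hlam hlamK) => //.
have hE : ECov L nl Q lam v = Q *m diag_mx lr *m Q^T + s%:M by rewrite /ECov hTh.
have i0 : 'I_d := Ordinal (leq_trans hK1 hKd').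
have e0 : 0 <= e := opnorm_ge0 _ i0.
have he1 : forall y, `|dot y ((C - (Q *m diag_mx lr *m Q^T + s%:M)) *m y)| <= e * dot y y.
  by move=> y; rewrite -hE; apply: opnorm_quad.
have he2 : forall x, dot ((C - (Q *m diag_mx lr *m Q^T + s%:M)) *m x)
   ((C - (Q *m diag_mx lr *m Q^T + s%:M)) *m x) <= e ^+ 2 * dot x x.
  by move=> x; rewrite -hE; apply: opnorm_sq.
have hlr : forall i j : 'I_K, (i <= j)%N -> lr 0 j <= lr 0 i.
  by move=> i j hij; rewrite !lrE; apply: (lam_mono hlam) => //; exact: ltn_ord.
have hlr0 : forall i, 0 < lr 0 i.
  by move=> i; rewrite lrE; apply: (lam_pos hlam hlamK) => //; exact: ltn_ord.
pose c (k : 'I_K) := (Q^T *m (V *m (delta_mx (widen_ord hKd' k) 0 : 'cV[R]_d))) k 0.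
have col_bound : forall k : 'I_K, (2 - 2 * `|c k|) * (gapmin K lam k.+1) ^+ 2 <= 8 * e ^+ 2.
  move=> k; case: (gap_facts hlam hlamK k) => gpos gle ggap.
  move: gpos gle ggap; set g := gapmin K lam k.+1 => gpos gle ggap.
  have wl := weyl_lower hKd' hQ hV hCV hmu hlr he1 k.
  have wu := weyl_upper hKd' hQ hV hCV hmu hlr hlr0 he1 k.
  rewrite lrE in wl wu.
  move: wl wu; set muk := mu (widen_ord hKd' k) => wl wu.
  have c2 : c k ^+ 2 <= 1.
    set x := V *m (delta_mx (widen_ord hKd' k) 0 : 'cV[R]_d).
    have hxx : dot x x = 1 by rewrite dotVc // dot_delta.
    have := bessel hQ x; rewrite hxx dot_sq (bigD1 k) //=.
    have : 0 <= \sum_(i < K | i != k) (Q^T *m x) i 0 ^+ 2 by apply: sumr_ge0 => i _; apply: sqr_ge0.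
    rewrite /c -/x; lra.
  have hr : `|lam k.+1 + s - muk| <= e by rewrite ler_norml; apply/andP; split; lra.
  have ct : c k ^+ 2 = `|c k| ^+ 2 by rewrite real_normK ?num_real.
  have cn : 0 <= `|c k| := normr_ge0 _.
  have [small|big] := ltP (2 * e) g.
    have := @eigvec_bound R d K hKd' Q V mu lr s e C hQ hV hCV he2 k (g - e).
    rewrite -/muk -/(c k) => hb.
    have hb' : (g - e) ^+ 2 * (1 - c k ^+ 2) <= e ^+ 2.
      apply: hb.
        move=> l hl; rewrite lrE.
        have -> : lam l.+1 + (s - muk) = (lam l.+1 - lam k.+1) + (lam k.+1 + s - muk) by ring.
        by apply: sq_lb => //; [lra | apply: ggap].
      have -> : s - muk = - lam k.+1 + (lam k.+1 + s - muk) by ring.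
      apply: sq_lb => //; first lra.
      by rewrite normrN gtr0_norm // (lam_pos hlam hlamK) //; exact: ltn_ord.
    rewrite ct in c2 hb'.
    have t1 : `|c k| <= 1 by nra.
    have A0 : 0 <= 1 - `|c k| ^+ 2 by lra.
    have B0 : g ^+ 2 <= 4 * (g - e) ^+ 2 by nra.
    have s1 : (2 - 2 * `|c k|) * g ^+ 2 <= 2 * (1 - `|c k| ^+ 2) * g ^+ 2.
      apply: ler_wpM2r; first by apply: sqr_ge0.
      nra.
    have s2 : 2 * (1 - `|c k| ^+ 2) * g ^+ 2 <= 2 * (1 - `|c k| ^+ 2) * (4 * (g - e) ^+ 2).
      by apply: ler_wpM2l => //; lra.
    nra.
  have g2 : g ^+ 2 <= 4 * e ^+ 2 by nra.
  have : 0 <= `|c k| * g ^+ 2 by apply: mulr_ge0 => //; apply: sqr_ge0.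
  nra.
pose sg : {ffun 'I_K -> bool} := [ffun k => c k < 0].
have hfrob : frob (X0 - Q *m signmx R sg) ^+ 2 = \sum_k (2 - 2 * `|c k|).
  rewrite /frob sqr_sqrtr; last first.
    by apply: sumr_ge0 => i _; apply: sumr_ge0 => j _; apply: sqr_ge0.
  rewrite exchange_big /=; apply: eq_bigr => j _.
  set A := X0 - Q *m signmx R sg.
  have -> : \sum_i A i j ^+ 2 = dot (col j A) (col j A).
    by rewrite dot_sq; apply: eq_bigr => i _; rewrite [in RHS]mxE.
  set sig : R := if sg j then -1 else 1.
  set x := V *m (delta_mx (widen_ord hKd' j) 0 : 'cV[R]_d).
  set q := Q *m (delta_mx j 0 : 'cV[R]_K).
  have -> : col j A = x - sig *: q.
    apply/matrixP => i zz; rewrite (ord1 zz) /x /q -!colE /A /signmx mul_mx_diag !mxE hX0c.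
    rewrite /sig; ring.
  have hxx : dot x x = 1 by rewrite dotVc // dot_delta.
  have hqq : dot q q = 1 by rewrite dotQc // dot_delta.
  have hqx : dot x q = c j by rewrite /q dot_mulmx dot_delta_r.
  rewrite dotBl !dotBr !dotZl !dotZr hxx hqq hqx (dotC q x) hqx.
  rewrite /sig /sg ffunE; case: ltP => h.
    by rewrite ltr0_norm //; ring.
  by rewrite ger0_norm //; ring.
have hdF : dF X0 Q <= frob (X0 - Q *m signmx R sg) by apply: bigmin_le.
have dF0 : 0 <= dF X0 Q.
  by apply/bigmin_geP; split => [|i _]; apply: sqrtr_ge0.
have hstief : stiefel X0.
  rewrite /stiefel; apply/matrixP => i j; rewrite !mxE.
  have := congr1 (fun A : 'M[R]_d => A (widen_ord hKd' i) (widen_ord hKd' j)) hV.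
  rewrite !mxE => <-; by apply: eq_bigr => r _; rewrite !mxE !hX0c.
have h1 := hbeta32 X0 hstief.
have frob0 : 0 <= frob (X0 - Q *m signmx R sg) by apply: sqrtr_ge0.
have h2 : dF X0 Q ^+ 2 <= \sum_k (2 - 2 * `|c k|) by rewrite -hfrob; nra.
set S := \sum_(k < K) ((gapmin K lam k.+1) ^+ 2)^-1.
have hS : \sum_(1 <= j < K.+1) ((gapmin K lam j) ^+ 2)^-1 = S by rewrite big_add1 /= big_mkord.
rewrite hS in hC.
have h3 : \sum_k (2 - 2 * `|c k|) <= 8 * e ^+ 2 * S.
  rewrite /S mulr_sumr; apply: ler_sum => k _.
  case: (gap_facts hlam hlamK k) => gpos _ _.
  rewrite ler_pdivlMr ?exprn_gt0 //; exact: col_bound.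
have Spos : 0 < S.
  rewrite /S (bigD1 (Ordinal hK1)) //=.
  case: (gap_facts hlam hlamK (Ordinal hK1)) => gpos _ _.
  have ha : 0 < ((gapmin K lam 1) ^+ 2)^-1 by rewrite invr_gt0 exprn_gt0.
  have hb : 0 <= \sum_(i < K | i != Ordinal hK1) ((gapmin K lam i.+1) ^+ 2)^-1.
    by apply: sumr_ge0 => i _; rewrite invr_ge0 sqr_ge0.
  move: ha hb; set a1 := (_^-1); set b1 := \sum_(i < K | _) _; lra.
have hC' : e ^+ 2 * (8 * beta3 * S) <= delta ^+ 2 * etab.
  by rewrite -ler_pdivlMr // !mulr_gt0.
have h4 : beta3 * dF X0 Q ^+ 2 <= beta3 * (8 * e ^+ 2 * S).
  apply: ler_wpM2l; [exact: ltW | exact: le_trans h2 h3].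
apply: le_trans h1 _; apply: le_trans h4 _.
by move: hC'; set E2 := e ^+ 2; move=> hC'; lra.
Qed.
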